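(* Let $0<a<1$ and let $w^*_n(a)$, $n\ge0$, be the rational functions of $(r,y,z)$ defined in the context. Then for all $n\ge1$, $$w^*_n(a)^2-w^*_{n+1}(a)w^*_{n-1}(a)=a^2(1-a)^2r^2z^4x_a^{\,n-2}.$$
   Context: Let $r,y,z$ be indeterminates. For $c\in(0,1)$ put $\omega_c:=1-(1-c)^2r^2y^2z^2$, $\tau_c:=1+(1-c)^2r^2z^2y(1-y)$, $x_c:=c^2z^2\tau_c^2$, $\beta_c:=1+z^2\big(c^2-(1-c)^2r^2(y^2+c^2(1-y)^2z^2)\big)$. Define $w^*_0(c):=(\beta_c-\omega_c)/x_c$, $w^*_1(c):=1$, and $w^*_{n+1}(c):=\beta_cw^*_n(c)-x_cw^*_{n-1}(c)$ for $n\ge1$ (so $w^*_2(c)=\omega_c$). *)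

(* Defs.v *)
From mathcomp Require Import all_boot all_order all_algebra.
Set Implicit Arguments. Unset Strict Implicit. Unset Printing Implicit Defensive.
Import Order.TTheory GRing.Theory Num.Theory.
Local Open Scope ring_scope.

Section WStar.
Variable R : fieldType.
Variables (c r y z : R).

Definition omega_c : R := 1 - (1 - c) ^+ 2 * r ^+ 2 * y ^+ 2 * z ^+ 2.
Definition tau_c : R := 1 + (1 - c) ^+ 2 * r ^+ 2 * z ^+ 2 * y * (1 - y).
Definition x_c : R := c ^+ 2 * z ^+ 2 * tau_c ^+ 2.
Definition beta_c : R :=
  1 + z ^+ 2 * (c ^+ 2 - (1 - c) ^+ 2 * r ^+ 2 * (y ^+ 2 + c ^+ 2 * (1 - y) ^+ 2 * z ^+ 2)).

(* pair (w*_n, w*_{n+1}) *)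
Fixpoint wstar_pair (n : nat) : R * R :=
  match n with
  | 0%N => ((beta_c - omega_c) / x_c, 1)
  | k.+1 => let p := wstar_pair k in (p.2, beta_c * p.2 - x_c * p.1)
  end.

Definition wstar (n : nat) : R := (wstar_pair n).1.
End WStar.

(* Main.v *)
Require Import Defs.
From mathcomp Require Import all_boot all_order all_algebra.
From mathcomp Require Import ring zify.
Import Order.TTheory GRing.Theory Num.Theory.
Local Open Scope ring_scope.

Lemma wrec (R : fieldType) (a r y z : R) k :
  wstar a r y z k.+2 = beta_c a r y z * wstar a r y z k.+1 - x_c a r y z * wstar a r y z k.
Proof. by []. Qed.

Lemma Dstep (R : fieldType) (a r y z : R) m :
  wstar a r y z m.+2 ^+ 2 - wstar a r y z m.+3 * wstar a r y z m.+1 = x_c a r y z * (wstar a r y z m.+1 ^+ 2 - wstar a r y z m.+2 * wstar a r y z m).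
Proof.
rewrite (wrec _ _ _ _ _ m.+1) (wrec _ _ _ _ _ m); ring.
Qed.

Theorem lemma1 (R : realFieldType) (a r y z : R) (n : nat) :
  0 < a -> a < 1 -> x_c a r y z != 0 -> (1 <= n)%N ->
  wstar a r y z n ^+ 2 - wstar a r y z n.+1 * wstar a r y z n.-1
  = a ^+ 2 * (1 - a) ^+ 2 * r ^+ 2 * z ^+ 4 * x_c a r y z ^ (n%:Z - 2).
Proof.
move=> _ _ hx; case: n => // m _ /=.
elim: m => [|m IH].
  have -> : ((1%N%:Z - 2) = -1 :> int)%R by [].
  rewrite exprN1 /wstar /=.
  move: hx; rewrite /beta_c /omega_c /x_c /tau_c => hx.
  field.
  have e : 1 + ((1 - a) * r * z) ^+ 2 * y * (1 - y) = 1 + (1 - a) ^+ 2 * r ^+ 2 * z ^+ 2 * y * (1 - y) by ring.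
  rewrite e; move: hx; rewrite !mulf_eq0 /= !negb_or.
  by case/and3P => /and3P[/andP[-> _] -> _] -> _.
rewrite Dstep IH.
have -> : ((m.+2)%:Z - 2 = 1 + ((m.+1)%:Z - 2))%R.
  by lia.
rewrite (@expfzDr _ _ 1 (m.+1%:Z - 2)) // expr1z; ring.
Qed.
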